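(* Let $M_n=V\,{\rm diag}(\Lambda_{n1},\dots,\Lambda_{nd})V^{-1}$, $n=1,\dots,N$, with $V$ real invertible and $\Lambda_{ni}$ real, let $\gamma=\min_{j<j'}\sum_{n=1}^N(\Lambda_{nj}-\Lambda_{nj'})^2$, and let $U_\circ$ be an orthogonal matrix with ${\rm low}(U_\circ^TM_nU_\circ)=0$ for all $n$. Then for every skew-symmetric $X$, $$\sum_{n=1}^N{\rm Tr}(\dot g_n^T\dot g_n)\ge\varepsilon\|X\|^2,\qquad \dot g_n={\rm low}\big([U_\circ^TM_nU_\circ,X]\big),\qquad \varepsilon=\frac{\gamma}{2\kappa(V)^4}.$$
   Context: ${\rm low}(A)$ is the strictly lower-triangular part of $A$; $[A,B]=AB-BA$; $\|\cdot\|$ is the Frobenius norm; $\kappa(V)=\sigma_{\max}(V)/\sigma_{\min}(V)$. *)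

(* Defs.v *)
From HB Require Import structures.
From mathcomp Require Import all_boot all_order all_algebra.
From mathcomp Require Import classical_sets reals.
Set Implicit Arguments. Unset Strict Implicit. Unset Printing Implicit Defensive.
Import Order.TTheory GRing.Theory Num.Theory.
Local Open Scope ring_scope.
Local Open Scope classical_set_scope.

Definition low (R : realType) (d : nat) (A : 'M[R]_d) : 'M[R]_d :=
  \matrix_(i, j) (if (j < i)%N then A i j else 0).

Definition comm_mxr (R : realType) (d : nat) (A B : 'M[R]_d) : 'M[R]_d :=
  A *m B - B *m A.

Definition frob (R : realType) (m n : nat) (A : 'M[R]_(m, n)) : R :=
  Num.sqrt (\sum_i \sum_j A i j ^+ 2).

Definition vnorm (R : realType) (d : nat) (x : 'cV[R]_d) : R :=
  Num.sqrt (\sum_i x i 0 ^+ 2).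

Definition sigma_max (R : realType) (d : nat) (V : 'M[R]_d) : R :=
  sup [set vnorm (V *m x) | x in [set x : 'cV[R]_d | vnorm x = 1]].
Definition sigma_min (R : realType) (d : nat) (V : 'M[R]_d) : R :=
  inf [set vnorm (V *m x) | x in [set x : 'cV[R]_d | vnorm x = 1]].

Definition kappa (R : realType) (d : nat) (V : 'M[R]_d) : R :=
  sigma_max V / sigma_min V.

Definition gap (R : realType) (N d : nat) (Lam : 'I_N -> 'I_d -> R) : R :=
  inf [set (\sum_n (Lam n p.1 - Lam n p.2) ^+ 2)
       | p in [set p : 'I_d * 'I_d | (p.1 < p.2)%N]].

(* Main.v *)
Require Import Defs.
From HB Require Import structures.
From mathcomp Require Import all_boot all_order all_algebra.
From mathcomp Require Import boolp classical_sets reals.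
From mathcomp Require Import ring lra zify.
Import Order.TTheory GRing.Theory Num.Theory.
Local Open Scope ring_scope.
Set Implicit Arguments. Unset Strict Implicit.

Section Gen.
Variable R : realType.

Lemma CS (I : finType) (a b : I -> R) :
  (\sum_i a i * b i) ^+ 2 <= (\sum_i a i ^+ 2) * (\sum_i b i ^+ 2).
Proof.
set A := \sum_i a i ^+ 2; set B := \sum_i b i ^+ 2; set S := \sum_i a i * b i.
have B0 : 0 <= B by apply: sumr_ge0 => i _; exact: sqr_ge0.
have E : \sum_i (a i * B - b i * S) ^+ 2 = B * (A * B - S ^+ 2).
  rewrite (eq_bigr (fun i => B ^+ 2 * a i ^+ 2 + (- (2 * B * S)) * (a i * b i)
      + S ^+ 2 * b i ^+ 2)); last by move=> i _; clear B0; move: (a i) (b i) B S => x y u v; ring.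
  rewrite !big_split /= -!mulr_sumr -/A -/B -/S.
  clear B0; clearbody A B S; ring.
have H : 0 <= B * (A * B - S ^+ 2) by rewrite -E; apply: sumr_ge0 => i _; exact: sqr_ge0.
case: (ltrgt0P B) => [Bp|Bn|Bz].
- by move: H; rewrite pmulr_rge0 // subr_ge0.
- by move: B0; rewrite leNgt Bn.
- have bz : forall i, b i = 0.
    move=> i; apply/eqP; rewrite -sqrf_eq0; apply/eqP.
    apply/eqP; rewrite eq_le sqr_ge0 andbT -Bz /B.
    rewrite (bigD1 i) //= lerDl; apply: sumr_ge0 => j _; exact: sqr_ge0.
  rewrite /S big1 ?expr0n ?Bz ?mulr0 // => i _; by rewrite bz mulr0.
Qed.

Definition sqn m n (A : 'M[R]_(m, n)) := \sum_i \sum_j A i j ^+ 2.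
Definition ipm m n (A B : 'M[R]_(m, n)) := \sum_i \sum_j A i j * B i j.

Lemma sqn_ge0 m n (A : 'M[R]_(m, n)) : 0 <= sqn A.
Proof. by apply: sumr_ge0 => i _; apply: sumr_ge0 => j _; exact: sqr_ge0. Qed.

Lemma ipm_tr n (A B : 'M[R]_n) : ipm A B = \tr (A^T *m B).
Proof.
rewrite /ipm /mxtrace exchange_big; apply: eq_bigr => j _.
by rewrite mxE; apply: eq_bigr => i _; rewrite mxE.
Qed.

Lemma sqn_ipm m n (A : 'M[R]_(m, n)) : sqn A = ipm A A.
Proof. by apply: eq_bigr => i _; apply: eq_bigr => j _; rewrite expr2. Qed.

Lemma tr_sqn n (A : 'M[R]_n) : \tr (A^T *m A) = sqn A.
Proof. by rewrite -ipm_tr sqn_ipm. Qed.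

Lemma sqn_tr m n (A : 'M[R]_(m, n)) : sqn A^T = sqn A.
Proof.
rewrite /sqn exchange_big; apply: eq_bigr => i _; apply: eq_bigr => j _.
by rewrite mxE.
Qed.

Lemma CSm m n (A B : 'M[R]_(m, n)) : ipm A B ^+ 2 <= sqn A * sqn B.
Proof. by rewrite /ipm /sqn !pair_bigA /=; apply: CS. Qed.

Definition opbound m (M : 'M[R]_m) (c : R) :=
  forall y : 'cV[R]_m, sqn (M *m y) <= c * sqn y.

Lemma opbound_mx m k (M : 'M[R]_m) c (Y : 'M[R]_(m, k)) :
  opbound M c -> sqn (M *m Y) <= c * sqn Y.
Proof.
move=> Hb; rewrite /sqn exchange_big [X in _ * X]exchange_big mulr_sumr.
apply: ler_sum => j _.
  have := Hb (col j Y); rewrite /sqn => H.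
  have E1 : forall i, (M *m col j Y) i 0 = (M *m Y) i j.
    by move=> i; rewrite !mxE; apply: eq_bigr => l _; rewrite mxE.
  have E2 : \sum_i \sum_j0 (M *m col j Y) i j0 ^+ 2 = \sum_i (M *m Y) i j ^+ 2.
    by apply: eq_bigr => i _; rewrite big_ord1 E1.
  have E3 : \sum_i \sum_j0 col j Y i j0 ^+ 2 = \sum_i Y i j ^+ 2.
    by apply: eq_bigr => i _; rewrite big_ord1 mxE.
  by rewrite -E2 -E3.
Qed.

Lemma opbound_tr m (M : 'M[R]_m) c : 0 <= c -> opbound M c -> opbound M^T c.
Proof.
move=> c0 Hb y; set z := M^T *m y.
have E : sqn z = ipm y (M *m z).
  rewrite /sqn /ipm.
  transitivity (\sum_i \sum_k M k i * y k 0 * z i 0).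
    apply: eq_bigr => i _; rewrite big_ord1 expr2 {1}/z mxE mulr_suml.
    by apply: eq_bigr => k _; rewrite mxE.
  rewrite exchange_big; apply: eq_bigr => k _; rewrite big_ord1 mxE mulr_sumr.
  by apply: eq_bigr => i _; move: (M k i) (y k 0) (z i 0) => p q r; ring.
have H1 := CSm y (M *m z); rewrite -E in H1.
have H2 : sqn z ^+ 2 <= sqn y * (c * sqn z).
  apply: le_trans H1 _; apply: ler_wpM2l; [exact: sqn_ge0 | exact: Hb].
have z0 := sqn_ge0 z.
case: (ltrgt0P (sqn z)) => [zp|zn|->]; last by rewrite mulr_ge0 ?sqn_ge0.
- move: H2; rewrite expr2 mulrA (mulrC _ c) -mulrA (mulrC _ (sqn z)) mulrA.
  by rewrite ler_pM2r // mulrC.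
- by move: z0; rewrite leNgt zn.
Qed.

Lemma sqn_mulr m (M Y : 'M[R]_m) c : 0 <= c -> opbound M c ->
  sqn (Y *m M^T) <= c * sqn Y.
Proof.
move=> c0 H; rewrite -sqn_tr trmx_mul trmxK.
by apply: le_trans (opbound_mx _ H) _; rewrite sqn_tr.
Qed.


Definition upper d (P : 'M[R]_d) := forall i j : 'I_d, (j < i)%N -> P i j = 0.
Definition slower d (P : 'M[R]_d) := forall i j : 'I_d, (i <= j)%N -> P i j = 0.

Lemma inv_upper d (P Q : 'M[R]_d) : P *m Q = 1%:M -> upper P -> upper Q.
Proof.
move=> PQ uP.
have key : forall k (i : 'I_d), (d - k <= i)%N -> forall j : 'I_d, (j < i)%N -> Q i j = 0.
  elim => [|k IH] i hi j ji.
    by have := ltn_ord i; lia.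
  case: (leqP (d - k) i) => h; first by apply: IH.
  have IH' : forall i' : 'I_d, (i < i')%N -> forall j : 'I_d, (j < i')%N -> Q i' j = 0.
    by move=> i' ii' j' jj'; apply: IH => //; lia.
  have e1 := congr1 (fun M : 'M[R]_d => M i i) PQ; rewrite /= !mxE eqxx /= in e1.
  rewrite (bigD1 i) //= big1 ?addr0 in e1; last first.
    move=> l /negbTE kn; case: (ltngtP l i) => ki.
    - by rewrite uP // mul0r.
    - by rewrite (IH' l ki i ki) mulr0.
    - by move/val_inj: ki => ki; rewrite ki eqxx in kn.
  have e2 := congr1 (fun M : 'M[R]_d => M i j) PQ; rewrite /= !mxE in e2.
  have ij : (i == j) = false by apply/negbTE; apply/eqP => e; rewrite e ltnn in ji.
  rewrite ij /= (bigD1 i) //= big1 ?addr0 in e2; last first.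
    move=> l /negbTE kn; case: (ltngtP l i) => ki.
    - by rewrite uP // mul0r.
    - by rewrite (IH' l ki j (ltn_trans ji ki)) mulr0.
    - by move/val_inj: ki => ki; rewrite ki eqxx in kn.
  have : Q i j * (P i i * Q i i) = Q i j by rewrite e1 mulr1.
  by rewrite mulrA (mulrC (Q i j)) e2 mul0r => <-.
by move=> i j ji; apply: (key d) => //; lia.
Qed.

Lemma tri_prod d (P C Q : 'M[R]_d) : upper P -> upper Q -> slower C ->
  slower (P^T *m C *m Q^T).
Proof.
move=> uP uQ sC i j ij; rewrite mxE big1 // => l _; rewrite !mxE.
case: (ltnP l j) => lj; first by rewrite uQ // mulr0.
rewrite big1 ?mul0r // => k _; rewrite mxE.
case: (ltnP i k) => ik; first by rewrite uP // mul0r.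
by rewrite sC ?mulr0 //; apply: leq_trans ik (leq_trans ij lj).
Qed.

Lemma ipm_low d (B C : 'M[R]_d) : slower B -> ipm B (low C) = ipm B C.
Proof.
move=> sB; apply: eq_bigr => i _; apply: eq_bigr => j _; rewrite mxE.
by case: ifP => // /negbT; rewrite -leqNgt => ij; rewrite sB // !mul0r.
Qed.

Lemma ipm_comm d (B T X : 'M[R]_d) :
  ipm B (T *m X - X *m T) = ipm (T^T *m B - B *m T^T) X.
Proof.
rewrite !ipm_tr mulmxBr !linearB /= trmx_mul trmxK mulmxBl.
rewrite !linearB /= trmx_mul trmxK mulmxA; congr (_ - _).
by rewrite mulmxA mxtrace_mulC mulmxA.
Qed.

Lemma ipm_suml d N (K : 'I_N -> 'M[R]_d) X :
  \sum_n ipm (K n) X = ipm (\sum_n K n) X.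
Proof.
rewrite /ipm exchange_big; apply: eq_bigr => i _.
rewrite exchange_big; apply: eq_bigr => j _.
by rewrite summxE mulr_suml.
Qed.

Lemma CSsum d N (P Q : 'I_N -> 'M[R]_d) :
  (\sum_n ipm (P n) (Q n)) ^+ 2 <= (\sum_n sqn (P n)) * (\sum_n sqn (Q n)).
Proof.
have E : forall F : 'I_N -> 'I_d -> 'I_d -> R,
  \sum_n \sum_i \sum_j F n i j = \sum_p F p.1.1 p.1.2 p.2.
  by move=> F; rewrite pair_bigA /= (pair_bigA _ (fun p j => F p.1 p.2 j)).
by rewrite /ipm /sqn !E; apply: CS.
Qed.

End Gen.

Section Core.
Variable R : realType.

Definition gapf N d (mu : 'I_N -> 'I_d -> R) (i j : 'I_d) :=
  \sum_n (mu n i - mu n j) ^+ 2.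

Lemma core d N (R0 Ri : 'M[R]_d) (mu : 'I_N -> 'I_d -> R) (gam c1 c2 : R)
  (X : 'M[R]_d) :
  R0 *m Ri = 1%:M -> Ri *m R0 = 1%:M -> upper R0 ->
  0 < gam -> (forall i j, i != j -> gam <= gapf mu i j) ->
  0 <= c1 -> 0 <= c2 -> opbound R0 c1 -> opbound Ri c2 ->
  X^T = - X ->
  gam / (2 * (c1 * c2) ^+ 2) * sqn X <=
  \sum_n sqn (low (comm_mxr (R0 *m diag_mx (\row_i mu n i) *m Ri) X)).
Proof.
move=> R0Ri RiR0 uR0 gam0 hgam c10 c20 b1 b2 sX.
set L := low X.
have LE : forall i j, L i j = if (j < i)%N then X i j else 0 by move=> i j; rewrite mxE.
have Xa : forall i j, X j i = - X i j.
  by move=> i j; have := congr1 (fun M : 'M[R]_d => M i j) sX; rewrite /= !mxE.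
have LL : forall i j, L i j * L j i = 0.
  move=> i j; rewrite !LE; case: (ltnP j i) => ji; last by rewrite mul0r.
  by rewrite ltnNge (ltnW ji) mulr0.
have Xd : forall i j, X i j = L i j - L j i.
  move=> i j; rewrite !LE; case: (ltngtP i j) => ij.
  - by rewrite sub0r (Xa i j) opprK.
  - by rewrite subr0.
  - move/val_inj: ij => ->; rewrite subr0.
    by have := Xa j j; move/eqP; rewrite -subr_eq0 opprK -mulr2n mulrn_eq0 /= => /eqP.
have sXL : sqn X = 2 * sqn L.
  rewrite /sqn.
  transitivity (\sum_i \sum_j (L i j ^+ 2 + L j i ^+ 2)).
    apply: eq_bigr => i _; apply: eq_bigr => j _; rewrite Xd.
    by have := LL i j; move: (L i j) (L j i) => p q e; rewrite sqrrB e mul0rn subr0.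
  rewrite (eq_bigr (fun i => \sum_j L i j ^+ 2 + \sum_j L j i ^+ 2)); last first.
    by move=> i _; rewrite big_split.
  by rewrite big_split /= [X in _ + X]exchange_big mulr2n mulrDl mul1r.
have uRi : upper Ri := inv_upper R0Ri uR0.
have sL : slower L by move=> i j ij; rewrite LE ltnNge ij.
set A := R0^T *m L *m Ri^T.
have sA : slower A := tri_prod uR0 uRi sL.
set H := fun n : 'I_N => \matrix_(i, j) (A i j * ((mu n i - mu n j) / gapf mu i j)).
have sH : forall n, slower (H n) by move=> n i j ij; rewrite mxE sA ?mul0r.
set B := fun n : 'I_N => Ri^T *m H n *m R0^T.
have sB : forall n, slower (B n) by move=> n; apply: tri_prod.
set G := fun n : 'I_N => low (comm_mxr (R0 *m diag_mx (\row_i mu n i) *m Ri) X).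
have RR1 : R0^T *m Ri^T = 1%:M by rewrite -trmx_mul RiR0 trmx1.
have RR2 : Ri^T *m R0^T = 1%:M by rewrite -trmx_mul R0Ri trmx1.
have S3 : \sum_n ipm (B n) (G n) = sqn L.
  rewrite (eq_bigr (fun n => ipm ((R0 *m diag_mx (\row_i mu n i) *m Ri)^T *m B n
       - B n *m (R0 *m diag_mx (\row_i mu n i) *m Ri)^T) X)); last first.
    by move=> n _; rewrite /G ipm_low // /comm_mxr ipm_comm.
  rewrite ipm_suml.
  have KE : forall n, (R0 *m diag_mx (\row_i mu n i) *m Ri)^T *m B n
       - B n *m (R0 *m diag_mx (\row_i mu n i) *m Ri)^T =
     Ri^T *m (diag_mx (\row_i mu n i) *m H n - H n *m diag_mx (\row_i mu n i)) *m R0^T.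
    move=> n; rewrite !trmx_mul tr_diag_mx /B.
    rewrite mulmxBr mulmxBl; congr (_ - _).
      by rewrite !mulmxA -(mulmxA _ R0^T) RR1 mulmx1.
    by rewrite !mulmxA -(mulmxA _ R0^T) RR1 mulmx1.
  rewrite (eq_bigr _ (fun n _ => KE n)) -mulmx_suml -mulmx_sumr.
  have SA : \sum_n (diag_mx (\row_i mu n i) *m H n - H n *m diag_mx (\row_i mu n i)) = A.
    apply/matrixP => i j; rewrite summxE.
    rewrite (eq_bigr (fun n => A i j * ((mu n i - mu n j) ^+ 2 / gapf mu i j))); last first.
      move=> n _; rewrite mul_diag_mx mul_mx_diag !mxE.
      by move: (A i j) (mu n i) (mu n j) (gapf mu i j) => a p q r; rewrite mulrBl; ring.
    rewrite -mulr_sumr -mulr_suml.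
    have [ij|ij] := eqVneq i j; first by rewrite ij sA ?mul0r.
    by rewrite divff ?mulr1 // gt_eqF // (lt_le_trans gam0) // hgam.
  rewrite SA /A !mulmxA RR2 mul1mx -mulmxA RR2 mulmx1.
  rewrite /ipm /sqn; apply: eq_bigr => i _; apply: eq_bigr => j _.
  by rewrite LE; case: ifP => _; rewrite ?mul0r ?expr2 // mul0r.
have b1t := opbound_tr c10 b1.
have b2t := opbound_tr c20 b2.
have bA : sqn A <= c1 * c2 * sqn L.
  rewrite /A; apply: le_trans (sqn_mulr _ c20 b2) _.
  rewrite (mulrC c1) -mulrA; apply: ler_wpM2l => //; exact: opbound_mx.
have bB : forall n, sqn (B n) <= c1 * c2 * sqn (H n).
  move=> n; rewrite /B; apply: le_trans (sqn_mulr _ c10 b1) _.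
  rewrite -mulrA; apply: ler_wpM2l => //; exact: opbound_mx.
have bH : \sum_n sqn (H n) <= sqn A / gam.
  rewrite /sqn exchange_big mulr_suml; apply: ler_sum => i _.
  rewrite exchange_big mulr_suml; apply: ler_sum => j _.
  rewrite (eq_bigr (fun n => A i j ^+ 2 * ((mu n i - mu n j) ^+ 2 / gapf mu i j ^+ 2))); last first.
    by move=> n _; rewrite mxE exprMn expr_div_n.
  rewrite -mulr_sumr -mulr_suml.
  have [ij|ij] := eqVneq i j; first by rewrite ij sA ?expr0n ?mul0r.
  have gp : 0 < gapf mu i j by apply: (lt_le_trans gam0); exact: hgam.
  have e : gapf mu i j / gapf mu i j ^+ 2 = (gapf mu i j)^-1.
    by rewrite expr2 invfM mulrA divff ?mul1r // gt_eqF.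
  rewrite e; apply: ler_wpM2l; first exact: sqr_ge0.
  by rewrite lef_pV2 ?hgam ?posrE.
have bBs : \sum_n sqn (B n) <= (c1 * c2) ^+ 2 / gam * sqn L.
  apply: le_trans (ler_sum _ (fun n _ => bB n)) _.
  rewrite -mulr_sumr; apply: le_trans (ler_wpM2l _ bH) _; first exact: mulr_ge0.
  have h1 : c1 * c2 * (sqn A / gam) <= c1 * c2 * (c1 * c2 * sqn L / gam).
    apply: ler_wpM2l; first exact: mulr_ge0.
    by apply: ler_wpM2r; [rewrite invr_ge0 ltW | exact: bA].
  apply: le_trans h1 _.
  rewrite le_eqVlt; apply/orP; left; apply/eqP.
  by move: (c1 * c2) (sqn L) (gam^-1) => p q r; ring.
have CSi := CSsum B G.
rewrite S3 in CSi.
set Q := \sum_n sqn (G n).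
have Q0 : 0 <= Q by apply: sumr_ge0 => n _; exact: sqn_ge0.
rewrite -/Q in CSi; clearbody Q.
have hS : sqn L ^+ 2 <= (c1 * c2) ^+ 2 / gam * sqn L * Q.
  by apply: le_trans CSi _; apply: ler_wpM2r.
rewrite sXL.
have [c0|cn] := eqVneq (c1 * c2) 0.
  by rewrite c0 expr0n /= mulr0 invr0 mulr0 mul0r.
have cp : 0 < (c1 * c2) ^+ 2 by rewrite exprn_gt0 // lt_def cn mulr_ge0.
have L0 := sqn_ge0 L.
have [Lz|Lp] := eqVneq (sqn L) 0; first by rewrite Lz mulr0 mulr0.
have Lpos : 0 < sqn L by rewrite lt_def Lp.
have key : gam * sqn L <= (c1 * c2) ^+ 2 * Q.
  have h2 : sqn L * sqn L <= sqn L * ((c1 * c2) ^+ 2 / gam * Q).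
    rewrite -expr2; apply: le_trans hS _; rewrite le_eqVlt; apply/orP; left; apply/eqP.
    ring.
  rewrite ler_pM2l // in h2.
  apply: le_trans (ler_wpM2l (ltW gam0) h2) _.
  by rewrite le_eqVlt; apply/orP; left; apply/eqP; field; rewrite gt_eqF.
have -> : gam / (2 * (c1 * c2) ^+ 2) * (2 * sqn L) = gam * sqn L / (c1 * c2) ^+ 2.
  by field; move: cn; rewrite mulf_eq0 negb_or andbC.
by rewrite (ler_pdivrMr _ _ cp) (mulrC Q).
Qed.

End Core.

Section Sigma.
Variable R : realType.
Local Open Scope classical_set_scope.

Lemma vnorm_sqn d (x : 'cV[R]_d) : vnorm x = Num.sqrt (sqn x).
Proof. by rewrite /vnorm /sqn; congr Num.sqrt; apply: eq_bigr => i _; rewrite big_ord1. Qed.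

Lemma sqn_scale m n (c : R) (A : 'M[R]_(m, n)) : sqn (c *: A) = c ^+ 2 * sqn A.
Proof.
rewrite /sqn mulr_sumr; apply: eq_bigr => i _; rewrite mulr_sumr.
by apply: eq_bigr => j _; rewrite mxE exprMn.
Qed.

Lemma sqn_mul_le d (V : 'M[R]_d) (x : 'cV[R]_d) : sqn (V *m x) <= sqn V * sqn x.
Proof.
rewrite /sqn mulr_suml; apply: ler_sum => i _; rewrite big_ord1 mxE.
have -> : \sum_k \sum_(j < 1) x k j ^+ 2 = \sum_k x k 0 ^+ 2.
  by apply: eq_bigr => k _; rewrite big_ord1.
exact: CS.
Qed.

Lemma unit_scale d (z : 'cV[R]_d) : 0 < sqn z ->
  vnorm ((Num.sqrt (sqn z))^-1 *: z) = 1.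
Proof.
move=> zp; rewrite vnorm_sqn sqn_scale exprVn sqr_sqrtr ?ltW //.
by rewrite mulVf ?sqrtr1 // gt_eqF.
Qed.

Lemma sqn_unit_scale d (V : 'M[R]_d) (z : 'cV[R]_d) : 0 < sqn z ->
  sqn (V *m ((Num.sqrt (sqn z))^-1 *: z)) = sqn (V *m z) / sqn z.
Proof.
by move=> zp; rewrite -scalemxAr sqn_scale exprVn sqr_sqrtr ?ltW // mulrC.
Qed.

Lemma sqrt_le_sq (a s : R) : 0 <= a -> Num.sqrt a <= s -> a <= s ^+ 2.
Proof.
move=> a0 h; have s0 : 0 <= s := le_trans (sqrtr_ge0 _) h.
rewrite -(sqr_sqrtr a0) ler_pXn2r // ?nnegrE ?sqrtr_ge0 //.
Qed.

Lemma smax_op d (V : 'M[R]_d) : opbound V (sigma_max V ^+ 2).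
Proof.
move=> z; have z0 := sqn_ge0 z.
have [zz|zp] := eqVneq (sqn z) 0.
  rewrite zz mulr0; apply: le_trans (sqn_mul_le V z) _; by rewrite zz mulr0.
have zpos : 0 < sqn z by rewrite lt_def zp.
rewrite /sigma_max; set E := (X in sup X).
have hub : has_ubound E.
  exists (Num.sqrt (sqn V)) => r [x /= x1 <-].
  rewrite vnorm_sqn ler_sqrt ?sqn_ge0 //; apply: le_trans (sqn_mul_le V x) _.
  have : sqn x = 1.
    by rewrite vnorm_sqn in x1; rewrite -(sqr_sqrtr (sqn_ge0 x)) x1 expr1n.
  by move=> ->; rewrite mulr1.
have h := ub_le_sup hub (ex_intro2 _ _ _ (unit_scale zpos) erefl).
rewrite vnorm_sqn sqn_unit_scale // in h.
have := sqrt_le_sq (divr_ge0 (sqn_ge0 _) z0) h.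
by rewrite ler_pdivrMr // mulrC.
Qed.

Lemma smin_ge0 d (V : 'M[R]_d) : 0 <= sigma_min V.
Proof.
rewrite /sigma_min; set E := (X in inf X).
case: (pselect (E !=set0)) => ne.
  by apply: lb_le_inf => // r [x _ <-]; exact: sqrtr_ge0.
have -> : E = set0 by apply/seteqP; split => // x Ex; apply: ne; exists x.
by rewrite inf0.
Qed.

Lemma smin_op d (V : 'M[R]_d) (z : 'cV[R]_d) :
  sigma_min V ^+ 2 * sqn z <= sqn (V *m z).
Proof.
have z0 := sqn_ge0 z; have s0 := smin_ge0 V.
have [zz|zp] := eqVneq (sqn z) 0; first by rewrite zz mulr0 sqn_ge0.
have zpos : 0 < sqn z by rewrite lt_def zp.
have hlb : has_lbound [set vnorm (V *m x) | x in [set x : 'cV[R]_d | vnorm x = 1]].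
  by exists 0 => r [x _ <-]; exact: sqrtr_ge0.
have h := ge_inf hlb (ex_intro2 _ _ _ (unit_scale zpos) erefl).
rewrite vnorm_sqn sqn_unit_scale // -/(sigma_min V) in h.
rewrite -ler_pdivlMr //.
rewrite -(sqr_sqrtr (divr_ge0 (sqn_ge0 (V *m z)) z0)).
by rewrite ler_pXn2r // ?nnegrE ?sqrtr_ge0.
Qed.

End Sigma.

Section Main.
Variable R : realType.
Local Open Scope classical_set_scope.

Lemma tr_sqn_gen m k (A : 'M[R]_(m, k)) : \tr (A^T *m A) = sqn A.
Proof.
rewrite /mxtrace /sqn exchange_big; apply: eq_bigr => j _; rewrite mxE.
by apply: eq_bigr => i _; rewrite mxE expr2.
Qed.

Lemma sqn_orth m k (M : 'M[R]_m) (Y : 'M[R]_(m, k)) :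
  M^T *m M = 1%:M -> sqn (M *m Y) = sqn Y.
Proof.
move=> MM; rewrite -!tr_sqn_gen trmx_mul -mulmxA (mulmxA M^T) MM mul1mx //.
Qed.

Lemma gap_le N d (Lam : 'I_N -> 'I_d -> R) (i j : 'I_d) :
  i != j -> gap Lam <= gapf Lam i j.
Proof.
move=> ij; rewrite /gap; set E := (X in inf X).
have hlb : has_lbound E.
  exists 0 => r [p _ <-]; apply: sumr_ge0 => n _; exact: sqr_ge0.
have sym : gapf Lam i j = gapf Lam j i.
  by apply: eq_bigr => n _; rewrite -sqrrN opprB.
case: (ltngtP i j) => h.
- by apply: (ge_inf hlb); exists (i, j).
- by rewrite sym; apply: (ge_inf hlb); exists (j, i).
- by move/val_inj: h => h; rewrite h eqxx in ij.
Qed.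

End Main.

Unset Implicit Arguments.

Theorem lemma10 (R : realType) (N d : nat) (V : 'M[R]_d)
  (Lam : 'I_N -> 'I_d -> R) (U : 'M[R]_d) :
  V \in unitmx ->
  U^T *m U = 1%:M ->
  (forall n : 'I_N,
     low (U^T *m (V *m diag_mx (\row_i Lam n i) *m invmx V) *m U) = 0) ->
  forall X : 'M[R]_d, X^T = - X ->
  \sum_(n < N)
     \tr ((low (comm_mxr (U^T *m (V *m diag_mx (\row_i Lam n i) *m invmx V) *m U) X))^T
          *m low (comm_mxr (U^T *m (V *m diag_mx (\row_i Lam n i) *m invmx V) *m U) X))
  >= gap Lam / (2 * kappa V ^+ 4) * frob X ^+ 2.
Proof.
move=> Vu UU hlow X sX.
set T := fun n : 'I_N => U^T *m (V *m diag_mx (\row_i Lam n i) *m invmx V) *m U.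
rewrite (eq_bigr (fun n => sqn (low (comm_mxr (T n) X)))); last first.
  by move=> n _; rewrite tr_sqn.
have LHS0 : 0 <= \sum_n sqn (low (comm_mxr (T n) X)).
  by apply: sumr_ge0 => n _; exact: sqn_ge0.
have fX : frob X ^+ 2 = sqn X by rewrite sqr_sqrtr // sqn_ge0.
rewrite fX.
have k4 : 0 <= 2 * kappa V ^+ 4.
  by rewrite mulr_ge0 // (_ : 4%N = (2 * 2)%N) // exprM sqr_ge0.
case: (leP (gap Lam) 0) => g0.
  apply: le_trans LHS0; apply: mulr_le0_ge0; last exact: sqn_ge0.
  by apply: mulr_le0_ge0 => //; rewrite invr_ge0.
have s20 := smin_ge0 V.
have [s2z|s2nz] := eqVneq (sigma_min V) 0.
  by rewrite /kappa s2z invr0 mulr0 expr0n /= mulr0 invr0 mulr0 mul0r.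
have s2p : 0 < sigma_min V by rewrite lt_def s2nz.
set W := U^T *m V.
set Wi := invmx V *m U.
have WWi : W *m Wi = 1%:M.
  by rewrite /W /Wi mulmxA -(mulmxA U^T) mulmxV // mulmx1.
have WiW : Wi *m W = 1%:M := mulmx1C WWi.
have TE : forall n, T n = W *m diag_mx (\row_i Lam n i) *m Wi.
  by move=> n; rewrite /T /W /Wi !mulmxA.
have TW : forall n, T n *m W = W *m diag_mx (\row_i Lam n i).
  by move=> n; rewrite TE -mulmxA WiW mulmx1.
have Tup : forall n (k m : 'I_d), (m < k)%N -> T n k m = 0.
  move=> n k m mk; have := congr1 (fun M : 'M[R]_d => M k m) (hlow n).
  by rewrite /= !mxE mk.
have Wdef : W = U^T *m V by [].
have Widef : Wi = invmx V *m U by [].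
clearbody T W Wi.
have colnz : forall j, (0 < #|[pred k | W k j != 0%R]|)%N.
  move=> j; apply/card_gt0P.
  case: (pselect (exists k, W k j != 0)) => [[k hk]|nz]; first by exists k.
  have z : forall k, W k j = 0.
    by move=> k; apply/eqP; apply/negPn/negP => hk; apply: nz; exists k.
  have := congr1 (fun M : 'M[R]_d => M j j) WiW.
  rewrite /= !mxE eqxx big1; last by move=> k _; rewrite z mulr0.
  by move/eqP; rewrite eq_sym oner_eq0.
pose h := fun j => sval (@eq_bigmax_cond _ [pred k | W k j != 0%R] (fun k : 'I_d => val k) (colnz j)).
have hnz : forall j, W (h j) j != 0.
  by move=> j; rewrite /h; case: (@eq_bigmax_cond _ _ _ (colnz j)) => k /= hk _; move: hk; rewrite inE.
have hmax : forall j (k : 'I_d), W k j != 0 -> (k <= h j)%N.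
  move=> j k hk; rewrite /h; case: (@eq_bigmax_cond _ _ (fun k : 'I_d => val k) (colnz j)) => k0 /= _ <-.
  by apply: (leq_bigmax_cond (P := fun i => i \in [pred k | W k j != 0])); rewrite inE.
have eigT : forall n j, Lam n j = T n (h j) (h j).
  move=> n j.
  have E1 : (T n *m W) (h j) j = T n (h j) (h j) * W (h j) j.
    rewrite [LHS]mxE (bigD1 (h j)) //= big1 ?addr0 //.
    move=> m /negbTE mn; case: (ltngtP m (h j)) => hm.
    - by rewrite Tup // mul0r.
    - have : W m j = 0.
        by apply/eqP; apply/negPn/negP => hw; have := hmax j m hw; rewrite leqNgt hm.
      by move=> ->; rewrite mulr0.
    - by move/val_inj: hm => hm; rewrite hm eqxx in mn.
  have E2 : (W *m diag_mx (\row_i Lam n i)) (h j) j = Lam n j * W (h j) j.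
    by rewrite mul_mx_diag [LHS]mxE [X in _ * X]mxE mulrC.
  by apply: (mulIf (hnz j)); rewrite -E1 -E2 TW.
have hinj : injective h.
  move=> j j' e; apply/eqP; apply/negPn/negP => ne.
  have := gap_le Lam ne.
  have -> : gapf Lam j j' = 0.
    by rewrite /gapf big1 // => n _; rewrite !eigT e subrr expr0n.
  by rewrite leNgt g0.
pose hinv := invF hinj.
have hK : cancel hinv h := f_invF hinj.
have hK' : cancel h hinv := invF_f hinj.
have hinvinj : injective hinv := can_inj hK.
pose R0 := \matrix_(k, m) W k (hinv m).
pose Ri := \matrix_(m, k) Wi (hinv m) k.
pose mu := fun n m => Lam n (hinv m).
have R0Ri : R0 *m Ri = 1%:M.
  apply/matrixP => k l; rewrite mxE.
  under eq_bigr do rewrite !mxE.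
  rewrite (reindex_inj hinj) /=.
  under eq_bigr do rewrite hK'.
  by have := congr1 (fun M : 'M[R]_d => M k l) WWi; rewrite /= mxE => ->.
have RiR0 : Ri *m R0 = 1%:M.
  apply/matrixP => m l; rewrite mxE.
  under eq_bigr do rewrite !mxE.
  have := congr1 (fun M : 'M[R]_d => M (hinv m) (hinv l)) WiW.
  by rewrite /= !mxE (inj_eq hinvinj) => ->.
have uR0 : upper R0.
  move=> k m mk; rewrite mxE; apply/eqP; apply/negPn/negP => hw.
  by have := hmax _ _ hw; rewrite hK leqNgt mk.
have TR : forall n, T n = R0 *m diag_mx (\row_i mu n i) *m Ri.
  move=> n; apply/matrixP => k l; rewrite TE !mul_mx_diag mxE [RHS]mxE.
  under [RHS]eq_bigr do rewrite !mxE.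
  rewrite [RHS](reindex_inj hinj) /=.
  by apply: eq_bigr => j _; rewrite !mxE /mu hK'.
have hgam : forall i j, i != j -> gap Lam <= gapf mu i j.
  by move=> i j ij; apply: gap_le; rewrite (inj_eq hinvinj).
have UUt : (U^T)^T *m U^T = 1%:M by rewrite trmxK; exact: mulmx1C UU.
have b1 : opbound R0 (sigma_max V ^+ 2).
  move=> y; pose y' := \matrix_(j, c) y (h j) c.
  have -> : R0 *m y = W *m y'.
    apply/matrixP => k c; rewrite !mxE.
    rewrite (reindex_inj hinj) /=; apply: eq_bigr => j _; rewrite !mxE hK'.
    done.
  have -> : sqn y = sqn y'.
    rewrite /sqn (reindex_inj hinj) /=; apply: eq_bigr => j _.
    by apply: eq_bigr => c _; rewrite mxE.
  by rewrite Wdef -mulmxA sqn_orth //; apply: smax_op.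
have c2p : 0 < (sigma_min V ^+ 2)^-1 by rewrite invr_gt0 exprn_gt0.
have b2 : opbound Ri (sigma_min V ^+ 2)^-1.
  move=> y.
  have -> : sqn (Ri *m y) = sqn (Wi *m y).
    rewrite /sqn [RHS](reindex_inj hinvinj) /=; apply: eq_bigr => m _.
    apply: eq_bigr => c _; rewrite !mxE; congr (_ ^+ 2).
    by apply: eq_bigr => k _; rewrite mxE.
  rewrite Widef -mulmxA ler_pdivlMl ?exprn_gt0 //.
  have := smin_op V (invmx V *m (U *m y)).
  by rewrite (mulmxA V) mulmxV // mul1mx sqn_orth.
have C := core R0Ri RiR0 uR0 g0 hgam (sqr_ge0 (sigma_max V)) (ltW c2p) b1 b2 sX.
rewrite (eq_bigr (fun n => sqn (low (comm_mxr (R0 *m diag_mx (\row_i mu n i) *m Ri) X)))); last first.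
  by move=> n _; rewrite TR.
apply: le_trans C; rewrite le_eqVlt; apply/orP; left; apply/eqP.
rewrite /kappa; congr (_ / (2 * _) * _).
by field.
Qed.
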